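(* Let $(S,d)$ be a metric space with at least two points. If $f\in\operatorname{ext}_*(B^S_{\mathrm{BL}})$, then $\inf_{x\in S}f(x)=-\sup_{x\in S}f(x)$. In particular, if $S$ is compact, then $f$ attains both values $\|f\|_\infty$ and $-\|f\|_\infty$.
   Context: $\mathrm{BL}(S)$ is the space of bounded real-valued Lipschitz functions on $S$, $|f|_L=\sup_{x\neq y}|f(x)-f(y)|/d(x,y)$, $\|f\|_{\mathrm{BL}}=\|f\|_\infty+|f|_L$, $B^S_{\mathrm{BL}}=\{f\in\mathrm{BL}(S):\|f\|_{\mathrm{BL}}\le1\}$, $\operatorname{ext}$ denotes extreme points, and $\operatorname{ext}_*(B^S_{\mathrm{BL}})=\operatorname{ext}(B^S_{\mathrm{BL}})\setminus\{f\in B^S_{\mathrm{BL}}:|f|=\mathbf{1}\}$. *)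

(* Defs.v *)
From HB Require Import structures.
From mathcomp Require Import all_boot all_order all_algebra.
From mathcomp Require Import all_classical all_reals.
Set Implicit Arguments. Unset Strict Implicit. Unset Printing Implicit Defensive.
Import Order.TTheory GRing.Theory Num.Theory.
Local Open Scope classical_set_scope.
Local Open Scope ring_scope.

Section BL.
Variables (R : realType) (S : Type) (d : S -> S -> R).

Definition is_metric : Prop :=
  [/\ (forall x y, 0 <= d x y),
      (forall x y, d x y = 0 <-> x = y),
      (forall x y, d x y = d y x) &
      (forall x y z, d x z <= d x y + d y z)].

Definition open_d (U : set S) : Prop :=
  forall x, U x -> exists2 e : R, 0 < e & forall y, d x y < e -> U y.

Definition compact_d : Prop :=
  forall (I : Type) (U : I -> set S),
    (forall i, open_d (U i)) -> (forall x, exists i, U i x) ->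
    exists2 F : set I, finite_set F & forall x, exists2 i, F i & U i x.

Definition bounded_fun (f : S -> R) : Prop :=
  exists M : R, forall x, `|f x| <= M.
Definition lipschitz_fun (f : S -> R) : Prop :=
  exists L : R, forall x y, `|f x - f y| <= L * d x y.
Definition BL (f : S -> R) : Prop := bounded_fun f /\ lipschitz_fun f.

Definition sup_norm (f : S -> R) : R := sup (range (fun x => `|f x|)).
Definition lip_const (f : S -> R) : R :=
  sup [set r | exists x y, x <> y /\ r = `|f x - f y| / d x y].
Definition bl_norm (f : S -> R) : R := sup_norm f + lip_const f.

Definition BL_ball (f : S -> R) : Prop := BL f /\ bl_norm f <= 1.

Definition is_extreme_BL (f : S -> R) : Prop :=
  BL_ball f /\
  forall (g h : S -> R) (t : R), BL_ball g -> BL_ball h -> 0 < t < 1 ->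
    f = (fun x => t * g x + (1 - t) * h x) -> g = h.

Definition ext_star (f : S -> R) : Prop :=
  is_extreme_BL f /\ ~ (forall x, `|f x| = 1).

End BL.

(* Main.v *)
Require Import Defs.
From HB Require Import structures.
From mathcomp Require Import all_boot all_order all_algebra.
From mathcomp Require Import all_classical all_reals.
From mathcomp Require Import ring lra.
Import Order.TTheory GRing.Theory Num.Theory.
Local Open Scope classical_set_scope.
Local Open Scope ring_scope.

Section Aux.
Variables (R : realType) (S : Type) (d : S -> S -> R).
Hypothesis hd : is_metric d.
Hypothesis h2 : exists x y : S, x <> y.

Lemma d_pos x y : x <> y -> 0 < d x y.
Proof.
case: hd => d0 dE _ _ nxy; rewrite lt_def d0 andbT.
by apply/eqP => /dE.
Qed.
Arguments d_pos {x y}.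

Lemma ball_bounds {f} : BL_ball d f ->
  (forall x, `|f x| <= sup_norm f) /\
  (forall x y, `|f x - f y| <= lip_const d f * d x y) /\
  sup_norm f + lip_const d f <= 1.
Proof.
move=> [[[M hM] [L hL]] h1]; split; [|split=>//].
- move=> x; apply: sup_upper_bound; last by exists x.
  split; first by exists `|f x|, x.
  by exists M => _ [y _ <-].
- move=> x y; have [->|nxy] := pselect (x = y).
    by case: hd => _ dE _ _; rewrite subrr normr0 (proj2 (dE y y) erefl) mulr0.
  have dp := d_pos nxy.
  rewrite -ler_pdivrMr //; apply: sup_upper_bound; last by exists x, y.
  split; first by exists (`|f x - f y| / d x y), x, y.
  exists L => _ [a [b [nab ->]]].
  by rewrite ler_pdivrMr ?hL // d_pos.
Qed.

Lemma ball_of g A K : (forall x, `|g x| <= A) ->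
  (forall x y, `|g x - g y| <= K * d x y) -> A + K <= 1 -> BL_ball d g.
Proof.
move=> hA hK hAK; have [x0 [y0 nxy]] := h2.
split; first by split; [exists A | exists K].
apply: le_trans hAK; apply: lerD.
- apply: ge_sup; first by exists `|g x0|, x0.
  by move=> _ [y _ <-].
- apply: ge_sup; first by exists (`|g x0 - g y0| / d x0 y0), x0, y0.
  move=> _ [a [b [nab ->]]].
  by rewrite ler_pdivrMr ?hK // d_pos.
Qed.

Lemma key {f} (hf : ext_star d f) {s c : R} : (s = 1 \/ s = -1) ->
  (forall x, c <= s * f x) -> sup_norm f + c <= 0.
Proof.
move=> hs hc; case: hf => [[hb hext] hn1].
have [hN [hL hNL]] := ball_bounds hb.
set N := sup_norm f in hN hNL *; set L := lip_const d f in hL hNL *.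
have [x0 [y0 nxy]] := h2.
have L0 : 0 <= L.
  have := hL x0 y0; have := d_pos nxy; have := normr_ge0 (f x0 - f y0).
  move=> a b c'; have : 0 <= L * d x0 y0 by apply: le_trans c'.
  by rewrite pmulr_lge0.
have s2 : s * s = 1 by case: hs => ->; ring.
have sabs : forall y, `|s * y| = `|y|.
  by move=> y; case: hs => ->; rewrite ?mul1r ?mulN1r ?normrN.
have hu : forall x, c <= s * f x <= N.
  move=> x; rewrite hc /=; apply: le_trans (hN x).
  by rewrite -(sabs (f x)) ler_norm.
have hu' : forall x, - N <= s * f x <= N.
  move=> x; rewrite -ler_norml sabs; exact: hN.
rewrite leNgt; apply/negP => Nc.
set del := (N + c) / 2.
have del0 : 0 < del by rewrite /del divr_gt0.
have N1 : N <= 1 by lra.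
have cN : c <= N by case/andP: (hu x0); apply: le_trans.
have del1 : del <= 1 by rewrite /del; lra.
pose g := fun x => (1 + del) * f x - s * del.
pose h := fun x => (1 - del) * f x + s * del.
have bg : BL_ball d g.
  apply: (@ball_of g (1 - (1 + del) * L) ((1 + del) * L)); last by lra.
  - move=> x; rewrite -sabs /g.
    have -> : s * ((1 + del) * f x - s * del) = (1 + del) * (s * f x) - (s * s) * del by ring.
    rewrite s2 mul1r; case/andP: (hu x) => u1 u2.
    set u := s * f x in u1 u2 *.
    rewrite ler_norml; apply/andP; split; rewrite /del in del0 *; nra.
  - move=> x y; rewrite /g.
    have -> : (1 + del) * f x - s * del - ((1 + del) * f y - s * del) = (1 + del) * (f x - f y) by ring.
    rewrite normrM ger0_norm; last by lra.
    rewrite -mulrA; apply: ler_wpM2l; [lra | exact: hL].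
have bh : BL_ball d h.
  apply: (@ball_of h (1 - (1 - del) * L) ((1 - del) * L)); last by lra.
  - move=> x; rewrite -sabs /h.
    have -> : s * ((1 - del) * f x + s * del) = (1 - del) * (s * f x) + (s * s) * del by ring.
    rewrite s2 mul1r; case/andP: (hu' x) => u1 u2.
    set u := s * f x in u1 u2 *.
    rewrite ler_norml; apply/andP; split; nra.
  - move=> x y; rewrite /h.
    have -> : (1 - del) * f x + s * del - ((1 - del) * f y + s * del) = (1 - del) * (f x - f y) by ring.
    rewrite normrM ger0_norm; last by lra.
    rewrite -mulrA; apply: ler_wpM2l; [lra | exact: hL].
have t01 : 0 < (2^-1 : R) < 1.
  by apply/andP; split; [rewrite invr_gt0 | rewrite invf_lt1]; lra.
have feq : f = (fun x => 2^-1 * g x + (1 - 2^-1) * h x).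
  by apply: funext => x; rewrite /g /h; field.
have egh := hext g h 2^-1 bg bh t01 feq.
apply: hn1 => x.
have := congr1 (fun k => k x) egh; rewrite /g /h /= => e.
have fx : f x = s.
  have : 2 * del * f x = 2 * del * s by lra.
  move/(mulfI _); apply; lra.
by rewrite fx; case: hs => ->; rewrite ?normrN normr1.
Qed.

Lemma attain {u : S -> R} {L M : R} : compact_d d ->
  (forall x y, `|u x - u y| <= L * d x y) -> (forall x, u x <= M) ->
  (forall e, 0 < e -> exists x, M - e < u x) -> exists x, u x = M.
Proof.
move=> hc hL hM happ; apply: contrapT => hne.
have lt : forall x, u x < M.
  by move=> x; rewrite lt_def hM andbT; apply/eqP => e; apply: hne; exists x.
pose U := fun n : nat => [set y | u y < M - (n.+1%:R)^-1].
have op : forall n, open_d d (U n).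
  move=> n x Ux; set a := M - (n.+1%:R)^-1 in Ux *.
  have K0 : 0 < `|L| + 1 by rewrite ltr_wpDl.
  exists ((a - u x) / (`|L| + 1)); first by rewrite divr_gt0 // subr_gt0.
  move=> y dxy; rewrite /U /=.
  have d0 : 0 <= d x y by case: hd.
  have h1 : `|u x - u y| <= (`|L| + 1) * d x y.
    apply: le_trans (hL x y) _; apply: ler_wpM2r => //.
    by apply: le_trans (ler_norm L) _; rewrite lerDl.
  have h2' : (`|L| + 1) * d x y < a - u x by rewrite mulrC -ltr_pdivlMr.
  have := ler_norm (u x - u y); rewrite -normrN => h3.
  have h4 : u y - u x <= `|u x - u y| by rewrite distrC ler_norm.
  have h5 : u y <= u x + (`|L| + 1) * d x y.
    by rewrite -lerBlDl; apply: le_trans h4 h1.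
  apply: le_lt_trans h5 _; by rewrite -ltrBrDl.
have cov : forall x, exists n, U n x.
  move=> x; have p : 0 < M - u x by rewrite subr_gt0.
  have b0 : 0 <= (M - u x)^-1 by rewrite invr_ge0 ltW.
  have := archi_boundP b0; set n := Num.Def.archi_bound _ => hn.
  exists n; rewrite /U /=.
  have : (n.+1%:R)^-1 < M - u x.
    rewrite invf_plt ?posrE //; apply: lt_le_trans hn _.
    by rewrite ler_nat.
  move: (n.+1%:R^-1 : R) => q hq; lra.
have [F finF hF] := hc nat U op cov.
have [X eX] := finite_fsetP.1 finF.
set n0 := \max_(i <- finmap.enum_fset X) i.
have e0 : 0 < (n0.+1%:R^-1 : R) by rewrite invr_gt0.
have [x hx] := happ _ e0.
have [i Fi Ui] := hF x.
have iX : i \in finmap.enum_fset X by move: Fi; rewrite eX.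
have in0 : (i <= n0)%N by rewrite /n0; exact: (@leq_bigmax_seq _ _ xpredT (fun j => j) i iX).
have : (n0.+1%:R^-1 : R) <= i.+1%:R^-1.
  by rewrite lef_pV2 ?posrE // ler_nat ltnS.
rewrite /U /= in Ui; move: Ui hx; clear.
move: (n0.+1%:R^-1 : R) (i.+1%:R^-1 : R) => q1 q2; lra.
Qed.

End Aux.

Theorem lemma3p4 (R : realType) (S : Type) (d : S -> S -> R)
  (hd : is_metric d) (h2 : exists x y : S, x <> y)
  (f : S -> R) (hf : ext_star d f) :
  inf (range f) = - sup (range f) /\
  (compact_d d ->
     (exists x, f x = sup_norm f) /\ (exists x, f x = - sup_norm f)).
Proof.
have [[hb _] _] := hf.
have [hN [hL hNL]] := ball_bounds _ _ _ hd hb.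
set N := sup_norm f in hN hNL *.
have [x0 _] := h2.
have ne : range f !=set0 by exists (f x0), x0.
have hs : has_sup (range f).
  split => //; exists N => _ [x _ <-]; apply: le_trans (hN x); exact: ler_norm.
have hi : has_lbound (range f).
  exists (- N) => _ [x _ <-]; have := hN x; rewrite ler_norml; by case/andP.
have hi' : has_inf (range f) by [].
have k1 := key _ _ _ hd h2 hf (or_intror erefl) (c := - sup (range f)).
have k1' : N - sup (range f) <= 0.
  apply: k1 => x; rewrite mulN1r lerN2; apply: sup_upper_bound => //; by exists x.
have k2 := key _ _ _ hd h2 hf (or_introl erefl) (c := inf (range f)).
have k2' : N + inf (range f) <= 0.
  apply: k2 => x; rewrite mul1r; apply: ge_inf => //; by exists x.
have MN : sup (range f) <= N.
  apply: ge_sup => // _ [x _ <-]; apply: le_trans (hN x); exact: ler_norm.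
have mN : - N <= inf (range f).
  apply: lb_le_inf => // _ [x _ <-]; have := hN x; rewrite ler_norml; by case/andP.
have eM : sup (range f) = N by lra.
have em : inf (range f) = - N by lra.
split; first by rewrite eM em.
move=> hc; split.
- apply: (@attain R S d hd f (lip_const d f) N hc hL).
  + move=> x; apply: le_trans (hN x); exact: ler_norm.
  + move=> e e0; have [_ [x _ <-] hx] := sup_adherent e0 hs.
    by exists x; rewrite -eM.
- have [x hx] : exists x, - f x = N.
    apply: (@attain R S d hd (fun x => - f x) (lip_const d f) N hc).
    + move=> x y; have -> : - f x - - f y = - (f x - f y) by ring.
      by rewrite normrN.
    + move=> x; rewrite lerNl; have := hN x; rewrite ler_norml; by case/andP.
    + move=> e e0; have [_ [x _ <-] hx] := inf_adherent e0 hi'.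
      exists x; rewrite em in hx; lra.
  by exists x; rewrite -hx opprK.
Qed.
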